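(* Let $p=(p_1,\dots,p_n)$ be a sequence of positive integers with $\min_i p_i=2$, and let $I=\{i\in[n]: p_i=2\}$. For a set $W$ of functions $I\to[2]$ define $$A_W=\{x\in S_p:\ \exists f\in W \text{ with } x_i=f(i)\ \forall i\in I\},\qquad B_W=\{y\in S_p:\ \nexists f\in W \text{ with } y_i\ne f(i)\ \forall i\in I\}.$$ Then every cross-intersecting pair $A,B\subseteq S_p$ satisfies $|A|+|B|\le|S_p|$ and $|A|\cdot|B|\le|S_p|^2/4$; and a cross-intersecting pair $(A,B)$ satisfies $|A|\cdot|B|=|S_p|^2/4$ if and only if $A=A_W$ and $B=B_W$ for some set $W$ of functions $I\to[2]$ with $|W|=2^{|I|-1}$.
   Context: $[m]=\{1,\dots,m\}$. For a sequence of positive integers $p=(p_1,\dots,p_n)$, $S_p=[p_1]\times\cdots\times[p_n]$. Two vectors $x,y\in S_p$ intersect if $x_i=y_i$ for some $i\in[n]$; families $A,B\subseteq S_p$ are cross-intersecting if every $x\in A$ and $y\in B$ intersect. *)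

(* Defs.v *)
From mathcomp Require Import all_boot.
Set Implicit Arguments. Unset Strict Implicit. Unset Printing Implicit Defensive.

(* Coordinates are 0-based: [m] = {1..m} is encoded as {0..m-1}.
   Vectors of S_p are encoded as finite functions 'I_n -> 'I_M with
   M = max_i p_i, and S_p is the subset of those with x i < p i. *)
Definition Mp (n : nat) (p : 'I_n -> nat) : nat := \max_(i < n) p i.

Definition Sp (n : nat) (p : 'I_n -> nat) : {set {ffun 'I_n -> 'I_(Mp p)}} :=
  [set x : {ffun 'I_n -> 'I_(Mp p)} | [forall i : 'I_n, x i < p i]].

Definition intersect (n m : nat) (x y : {ffun 'I_n -> 'I_m}) : Prop :=
  exists i, x i = y i.

Definition cross_intersecting (n m : nat) (A B : {set {ffun 'I_n -> 'I_m}}) : Prop :=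
  forall x y, x \in A -> y \in B -> intersect x y.

Definition Iset (n : nat) (p : 'I_n -> nat) : {set 'I_n} := [set i | p i == 2].

Definition A_W (n : nat) (p : 'I_n -> nat)
  (W : {set {ffun {i : 'I_n | p i == 2} -> 'I_2}}) : {set {ffun 'I_n -> 'I_(Mp p)}} :=
  [set x in Sp p | [exists f in W, [forall j : {i : 'I_n | p i == 2}, val (x (val j)) == val (f j)]]].

Definition B_W (n : nat) (p : 'I_n -> nat)
  (W : {set {ffun {i : 'I_n | p i == 2} -> 'I_2}}) : {set {ffun 'I_n -> 'I_(Mp p)}} :=
  [set y in Sp p | ~~ [exists f in W, [forall j : {i : 'I_n | p i == 2}, val (y (val j)) != val (f j)]]].

(* Main.v *)
Require Import Defs.
From mathcomp Require Import all_boot.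
From mathcomp Require Import zify.
Set Implicit Arguments. Unset Strict Implicit. Unset Printing Implicit Defensive.

Section Main.
Variable n : nat.
Variable p : 'I_n -> nat.
Hypothesis hmin2 : forall i, 2 <= p i.

Local Notation vec := {ffun 'I_n -> 'I_(Mp p)}.
Local Notation Isig := {i : 'I_n | p i == 2}.
Local Notation fI := {ffun {i : 'I_n | p i == 2} -> 'I_2}.

Lemma p_gt0 i : 0 < p i. Proof. exact: leq_trans (hmin2 i). Qed.
Lemma p_leM i : p i <= Mp p. Proof. rewrite /Mp. exact: (leq_bigmax i). Qed.

Lemma inSP (x : vec) : reflect (forall i, x i < p i) (x \in Sp p).
Proof. rewrite inE; exact: forallP. Qed.

Definition shv (s : 'I_n -> nat) (y : vec) : vec :=
  [ffun i => insubd (y i) ((y i + s i) %% p i)].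

Lemma val_shv s y i : val (shv s y i) = (y i + s i) %% p i.
Proof.
rewrite ffunE val_insubd.
by rewrite (leq_trans (ltn_pmod _ (p_gt0 i)) (p_leM i)).
Qed.

Lemma shv_S s y : shv s y \in Sp p.
Proof. apply/inSP => i; rewrite val_shv ltn_pmod //; exact: p_gt0. Qed.

Lemma shv_inj s : {in Sp p &, injective (shv s)}.
Proof.
move=> x y /inSP hx /inSP hy e; apply/ffunP => i; apply: val_inj.
have := congr1 (fun z : vec => val (z i)) e; rewrite /= !val_shv => /eqP.
by rewrite eqn_modDr !modn_small // => /eqP.
Qed.

Definition der (s : 'I_n -> nat) := forall i, s i %% p i != 0.

Lemma shv_der s y : der s -> y \in Sp p -> forall i, shv s y i != y i.
Proof.
move=> hs /inSP hy i; apply/negP => /eqP /(congr1 val); rewrite /= val_shv => e.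
have : (y i + s i == y i + 0 %[mod p i]) by rewrite e addn0 (modn_small (hy i)).
by rewrite eqn_modDl mod0n (negbTE (hs i)).
Qed.

Lemma cross_shv (A B : {set vec}) s : B \subset Sp p -> cross_intersecting A B -> der s ->
  forall y, y \in B -> shv s y \notin A.
Proof.
move=> sB cAB hs y yB; apply/negP => hA.
have [i ei] := cAB _ _ hA yB.
by have := shv_der hs (subsetP sB _ yB) i; rewrite ei eqxx.
Qed.

Lemma card_shv (B : {set vec}) s : B \subset Sp p -> #|shv s @: B| = #|B|.
Proof. move=> sB; apply: card_in_imset => x y hx hy; apply: shv_inj; exact: (subsetP sB). Qed.

Lemma sum_bound (A B : {set vec}) s : A \subset Sp p -> B \subset Sp p ->
  cross_intersecting A B -> der s -> #|A| + #|B| <= #|Sp p|.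
Proof.
move=> sA sB cAB hs.
have dis : A :&: shv s @: B = set0.
  apply/eqP; rewrite -subset0; apply/subsetP => x /setIP [xA /imsetP [y yB ex]]; subst x.
  by have := cross_shv sB cAB hs yB; rewrite xA.
rewrite -(card_shv s sB).
have -> : #|A| + #|shv s @: B| = #|A :|: shv s @: B|.
  by rewrite cardsU dis cards0 subn0.
apply: subset_leq_card; rewrite subUset sA /=.
apply/subsetP => z /imsetP [y _ ->]; exact: shv_S.
Qed.

Lemma tight (A B : {set vec}) s : A \subset Sp p -> B \subset Sp p ->
  cross_intersecting A B -> der s ->
  #|A| + #|B| = #|Sp p| -> forall y, y \in Sp p -> (y \in B) = (shv s y \notin A).
Proof.
move=> sA sB cAB hs eq y yS.
have sub : shv s @: B \subset Sp p :\: A.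
  apply/subsetP => z /imsetP [w wB ->]; rewrite in_setD shv_S andbT; exact: (cross_shv sB cAB hs wB).
have eqs : shv s @: B = Sp p :\: A.
  apply/eqP; rewrite eqEcard sub /= card_shv // cardsD (setIidPr sA).
  by rewrite -eq addKn.
apply/idP/idP => [yB | nA]; first exact: (cross_shv sB cAB hs yB).
have : shv s y \in Sp p :\: A by rewrite in_setD nA shv_S.
rewrite -eqs => /imsetP [w wB e].
by rewrite (shv_inj yS (subsetP sB _ wB) e).
Qed.

Definition avoid (a b : nat) : nat :=
  if (a != 0) && (b != 0) then 0 else if (a != 1) && (b != 1) then 1 else 2.

Lemma avoid_lt a b q : a < q -> b < q -> 2 <= q -> (q = 2 -> a = b) ->
  [/\ avoid a b < q, avoid a b != a & avoid a b != b].
Proof.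
move=> ha hb hq hq2; rewrite /avoid.
case: (a =P 0) => ?; case: (b =P 0) => ?; case: (a =P 1) => ?; case: (b =P 1) => ? /=;
  split; try (apply/eqP; lia); try lia.
Qed.

Lemma hit (x y : vec) : x \in Sp p -> y \in Sp p -> (forall i, val (x i) != val (y i)) ->
  exists s, der s /\ shv s y = x.
Proof.
move=> /inSP hx /inSP hy hne.
have E i : y i + (x i + (p i - y i)) = x i + p i by have := hy i; lia.
exists (fun i => x i + (p i - y i)); split.
- move=> i; apply/negP => /eqP h0.
  have : (y i + (x i + (p i - y i))) %% p i = y i.
    by rewrite -modnDmr h0 addn0 modn_small.
  rewrite E modnDr modn_small // => e.
  by move/eqP: e; rewrite (negbTE (hne i)).
- apply/ffunP => i; apply: val_inj; rewrite val_shv.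
  by rewrite E modnDr modn_small.
Qed.

Lemma cyl (A B : {set vec}) : A \subset Sp p -> B \subset Sp p -> cross_intersecting A B ->
  #|A| + #|B| = #|Sp p| -> forall x x', x \in Sp p -> x' \in Sp p ->
  (forall i, p i = 2 -> x i = x' i) -> x \in A -> x' \in A.
Proof.
move=> sA sB cAB eq x x' xS x'S hI xA.
have hx := elimT (inSP x) xS; have hx' := elimT (inSP x') x'S.
have av i := avoid_lt (hx i) (hx' i) (hmin2 i) (fun h => congr1 val (hI i h)).
pose y : vec := [ffun i => insubd (x i) (avoid (x i) (x' i))].
have vy i : val (y i) = avoid (x i) (x' i).
  rewrite ffunE val_insubd.
  by have [h _ _] := av i; rewrite (leq_trans h (p_leM i)).
have yS : y \in Sp p by apply/inSP => i; rewrite vy; have [] := av i.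
have [s [hs es]] : exists s, der s /\ shv s y = x.
  by apply: hit => // i; rewrite vy eq_sym; have [] := av i.
have [s' [hs' es']] : exists s, der s /\ shv s y = x'.
  by apply: hit => // i; rewrite vy eq_sym; have [] := av i.
have : y \notin B by rewrite (tight sA sB cAB hs eq yS) es xA.
by rewrite (tight sA sB cAB hs' eq yS) es' negbK.
Qed.

Definition r (x : vec) : fI := [ffun j => inord (x (val j))].

Lemma val_r x j : x \in Sp p -> val (r x j) = x (val j).
Proof.
move=> /inSP hx; rewrite ffunE; apply: inordK.
by have := hx (val j); rewrite (eqP (valP j)).
Qed.

Definition setI2 (g : fI) (x : vec) : vec :=
  [ffun i => match (insub i : option Isig) with
             | Some j => insubd (x i) (val (g j)) | None => x i end].

Lemma val_setI2 g x (j : Isig) : val (setI2 g x (val j)) = val (g j).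
Proof.
rewrite ffunE valK val_insubd.
have h := ltn_ord (g j).
have := p_leM (val j); rewrite (eqP (valP j)) => h2.
by rewrite (leq_trans h h2).
Qed.

Lemma setI2_n g x i : p i != 2 -> setI2 g x i = x i.
Proof. by move=> h; rewrite ffunE insubN. Qed.

Lemma setI2_S g x : x \in Sp p -> setI2 g x \in Sp p.
Proof.
move=> /inSP hx; apply/inSP => i.
case: (boolP (p i == 2)) => h; last by rewrite setI2_n.
have := val_setI2 g x (Sub i h); rewrite /= => ->.
by rewrite (eqP h).
Qed.

Lemma r_setI2 g x : x \in Sp p -> r (setI2 g x) = g.
Proof.
move=> xS; apply/ffunP => j; apply: val_inj.
by rewrite val_r ?setI2_S // val_setI2.
Qed.

Definition fib (g : fI) := [set x in Sp p | r x == g].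

Lemma inFib x g : (x \in fib g) = (x \in Sp p) && (r x == g).
Proof. by rewrite /fib in_set. Qed.

Lemma fib_le f g : #|fib f| <= #|fib g|.
Proof.
have inj : {in fib f &, injective (setI2 g)}.
  move=> x y; rewrite !inFib => /andP [xS /eqP rx] /andP [yS /eqP ry] e.
  apply/ffunP => i; case: (boolP (p i == 2)) => h.
    apply: val_inj.
    have := val_r (Sub i h) xS; have := val_r (Sub i h) yS; rewrite /= rx ry => <- <- //.
  by have := congr1 (fun z : vec => z i) e; rewrite /= !setI2_n.
rewrite -(card_in_imset inj); apply: subset_leq_card.
apply/subsetP => z /imsetP [x xf ->].
have /andP [xS _] : (x \in Sp p) && (r x == f) by rewrite -inFib.
by rewrite inFib setI2_S // r_setI2 // eqxx.
Qed.

Lemma fib_eq f g : #|fib f| = #|fib g|.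
Proof. by apply/eqP; rewrite eqn_leq !fib_le. Qed.

Definition c := #|fib [ffun _ => ord0]|.
Definition Cyl (V : {set fI}) := [set x in Sp p | r x \in V].

Lemma inCyl x V : (x \in Cyl V) = (x \in Sp p) && (r x \in V).
Proof. by rewrite /Cyl in_set. Qed.

Lemma card_Cyl V : #|Cyl V| = #|V| * c.
Proof.
rewrite -sum1_card (partition_big r (mem V)) /=; last first.
  by move=> x; rewrite inCyl => /andP [].
rewrite -sum_nat_const; apply: eq_bigr => g gV.
rewrite sum1_card /c -(fib_eq g); apply: eq_card => x.
rewrite inFib -topredE /= inCyl; case: (r x =P g) => [->|]; by rewrite ?gV ?andbT ?andbF.
Qed.

Lemma card_Isig : #|{: Isig}| = #|Iset p|.
Proof. by rewrite card_sig /Iset cardsE. Qed.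

Lemma card_S : #|Sp p| = 2 ^ #|Iset p| * c.
Proof.
have -> : Sp p = Cyl setT by apply/setP => x; rewrite /Cyl !inE andbT.
by rewrite card_Cyl cardsT card_ffun card_ord card_Isig.
Qed.

Definition comp (g : fI) : fI := [ffun j => inord (1 - g j)].

Lemma val_inord2 k : k < 2 -> val (inord k : 'I_2) = k.
Proof. exact: inordK. Qed.

Lemma compK : involutive comp.
Proof.
move=> g; apply/ffunP => j; apply: val_inj; rewrite !ffunE.
move: (g j) => a; case: a => a ha /=.
rewrite val_inord2; last by lia.
rewrite val_inord2; last by lia.
lia.
Qed.

Lemma comp_neq (g f : fI) : [forall j, val (g j) != val (f j)] = (g == comp f).
Proof.
apply/forallP/eqP => [h | ->].
  apply/ffunP => j; apply: val_inj; rewrite ffunE.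
  move: (h j); case: (g j) => a ha; case: (f j) => b hb /= hab.
  rewrite val_inord2; last by lia.
  move/eqP: hab; lia.
move=> j; rewrite ffunE; case: (f j) => b hb /=.
rewrite val_inord2; last by lia.
apply/eqP; lia.
Qed.

Definition W2 (W : {set fI}) :=
  [set g : fI | ~~ [exists f in W, [forall j, val (g j) != val (f j)]]].

Lemma W2_eq W : W2 W = ~: (comp @: W).
Proof.
apply/setP => g; rewrite !inE; congr negb.
apply/existsP/imsetP => [[f /andP [fW]] | [f fW ->]].
  by rewrite comp_neq => /eqP ->; exists f.
by exists f; rewrite fW comp_neq eqxx.
Qed.

Lemma inW2 W (g : fI) : (g \in W2 W) = (comp g \notin W).
Proof.
rewrite W2_eq inE; congr negb; apply/imsetP/idP => [[f fW ->]|h].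
  by rewrite compK.
by exists (comp g); rewrite ?compK.
Qed.

Lemma card_W2 W : #|W2 W| = 2 ^ #|Iset p| - #|W|.
Proof.
rewrite W2_eq.
have := cardsC (comp @: W); rewrite card_imset; last exact: can_inj compK.
rewrite card_ffun card_ord card_Isig. move=> <-; by rewrite addKn.
Qed.

Lemma A_W_Cyl W : A_W W = Cyl W.
Proof.
apply/setP => x; rewrite /A_W /Cyl in_set [in RHS]in_set.
case xS: (x \in Sp p) => //=.
apply/existsP/idP => [[f /andP [fW /forallP h]] | rW].
  have -> : r x = f by apply/ffunP => j; apply: val_inj; rewrite val_r //; exact/eqP/h.
  done.
exists (r x); rewrite rW; apply/forallP => j; by rewrite val_r.
Qed.

Lemma B_W_Cyl W : B_W W = Cyl (W2 W).
Proof.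
apply/setP => x; rewrite /B_W /Cyl in_set [in RHS]in_set.
case xS: (x \in Sp p) => //=.
rewrite inE; congr negb; apply: eq_existsb => f; congr andb.
by apply: eq_forallb => j; rewrite val_r.
Qed.

Lemma der1 : der (fun _ => 1).
Proof. move=> i; rewrite modn_small //; exact: hmin2. Qed.

Lemma r_shv1 y : y \in Sp p -> r (shv (fun _ => 1) y) = comp (r y).
Proof.
move=> yS; apply/ffunP => j; apply: val_inj.
have hy := elimT (inSP y) yS (val j); rewrite (eqP (valP j)) in hy.
have e1 := val_r j yS.
rewrite val_r ?shv_S // val_shv ffunE (eqP (valP j)).
move: e1 hy; case: (r y j) => b hb /= ->.
case: (y (val j)) => a ha /= hy.
rewrite val_inord2; last by lia.
by case: a ha hy => [|[|a]].
Qed.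

Lemma S_gt0 : (exists i, p i = 2) -> 0 < #|Sp p|.
Proof.
move=> [i _]; have hM : 0 < Mp p := leq_trans (p_gt0 i) (p_leM i).
apply/card_gt0P; exists [ffun _ => Ordinal hM]; apply/inSP => k; rewrite ffunE /=.
exact: p_gt0.
Qed.

Lemma I_gt0 : (exists i, p i = 2) -> 0 < #|Iset p|.
Proof. move=> [i hi]; apply/card_gt0P; exists i; rewrite inE; exact/eqP. Qed.

End Main.

Lemma amgm a b : 4 * (a * b) <= (a + b) * (a + b).
Proof.
wlog h : a b / a <= b.
  move=> H; case: (leqP a b) => h; first exact: H.
  rewrite [a * b]mulnC (addnC a); apply: H; exact: ltnW.
have [d ->] : exists d, b = a + d by exists (b - a); lia.
have := leq0n (d * d); nia.
Qed.

Lemma tight_nat a b S : a + b <= S -> 4 * (a * b) = S ^ 2 -> a + b = S /\ a = b.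
Proof. move=> h e; have := amgm a b; have := leq_mul h h; rewrite -mulnn in e; nia. Qed.

Theorem mainTheorem12 (n : nat) (p : 'I_n -> nat)
  (hpos : forall i, 0 < p i)
  (hmin2 : forall i, 2 <= p i)
  (hex2 : exists i, p i = 2) :
  (forall A B : {set {ffun 'I_n -> 'I_(Mp p)}},
     A \subset Sp p -> B \subset Sp p -> cross_intersecting A B ->
     #|A| + #|B| <= #|Sp p| /\ 4 * (#|A| * #|B|) <= #|Sp p| ^ 2) /\
  (forall A B : {set {ffun 'I_n -> 'I_(Mp p)}},
     A \subset Sp p -> B \subset Sp p -> cross_intersecting A B ->
     (4 * (#|A| * #|B|) = #|Sp p| ^ 2 <->
      exists W : {set {ffun {i : 'I_n | p i == 2} -> 'I_2}},
        #|W| = 2 ^ (#|Iset p| - 1) /\ A = A_W W /\ B = B_W W)).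
Proof.
have d1 := der1 hmin2.
have P1 : forall A B : {set {ffun 'I_n -> 'I_(Mp p)}}, A \subset Sp p -> B \subset Sp p ->
    cross_intersecting A B -> #|A| + #|B| <= #|Sp p|.
  by move=> A B sA sB cAB; exact: (sum_bound hmin2 sA sB cAB d1).
split.
  move=> A B sA sB cAB; have h := P1 A B sA sB cAB; split => //.
  rewrite -mulnn; exact: leq_trans (amgm _ _) (leq_mul h h).
move=> A B sA sB cAB; have hs := P1 A B sA sB cAB.
have k0 := I_gt0 hex2.
have Sgt := S_gt0 hmin2 hex2.
have cS := card_S p.
have ek : 2 ^ #|Iset p| = 2 * 2 ^ (#|Iset p| - 1) by rewrite -expnS subn1 prednK.
rewrite ek in cS.
have c0 : 0 < c p.
  by move: Sgt; rewrite cS !muln_gt0 => /andP [_].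
split.
- move=> e.
  have [eS eAB] := tight_nat hs e.
  pose W := [set r x | x in A].
  have hA : A = Cyl W.
    apply/setP => x; rewrite inCyl; apply/idP/idP => [xA | /andP [xS /imsetP [x' x'A e']]].
      by rewrite (subsetP sA _ xA) imset_f.
    have x'S := subsetP sA _ x'A.
    apply: (cyl hmin2 sA sB cAB eS x'S xS _ x'A) => i hi.
    apply: val_inj; have hj : p i == 2 by apply/eqP.
    have h1 := val_r (Sub i hj : {i : 'I_n | p i == 2}) xS.
    have h2 := val_r (Sub i hj : {i : 'I_n | p i == 2}) x'S.
    rewrite e' in h1; exact: (etrans (esym h2) h1).
  exists W; split; [|split].
  + have cA : #|A| = #|W| * c p by rewrite {1}hA card_Cyl.
    apply/eqP; rewrite -(eqn_pmul2r c0); apply/eqP.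
    move: cS cA eS eAB; rewrite -/(#|Sp p|).
    move: (#|W|) (#|A|) (#|B|) (#|Sp p|) (c p) (2 ^ (#|Iset p| - 1)) => w a b s cc t.
    nia.
  + by rewrite A_W_Cyl.
  + apply/setP => y; rewrite B_W_Cyl inCyl inW2.
    case yS : (y \in Sp p) => /=; last by apply/negP => /(subsetP sB); rewrite yS.
    by rewrite (tight hmin2 sA sB cAB d1 eS yS) {1}hA inCyl (shv_S hmin2) (r_shv1 hmin2 yS).
- move=> [W [hW [-> ->]]].
  rewrite A_W_Cyl B_W_Cyl !card_Cyl card_W2 hW cS ek.
  move: (c p) (2 ^ (#|Iset p| - 1)) => cc t.
  rewrite mul2n -addnn addnK; nia.
Qed.
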